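(* Let $p\ge1$, $m\in\mathbb{N}$, $a,b>0$, $\beta\in\mathbb{R}^p$, let $f=(1,f_1,\ldots,f_{p-1})^T$ be arbitrary regression functions on a design region $\mathcal{X}$, let $A$ be a real $p\times s$ matrix of rank $s$ and $B=AA^T$. Then a design $\xi^*$ is $L$-optimal (with respect to $B$) in the Poisson–Gamma model if and only if $\xi^*$ is $L$-optimal (with respect to $B$) in the Poisson model. In particular, for any $c\in\mathbb{R}^p\setminus\{0\}$, $\xi^*$ is $c$-optimal in the Poisson–Gamma model if and only if it is $c$-optimal in the Poisson model.
   Context: A design $\xi$ is a probability measure on $\mathcal{X}$ with finite support $x_1,\ldots,x_l$ and weights $w_1,\ldots,w_l\ge0$, $\sum_j w_j=1$. The Poisson information matrix is $M_{Po}(\xi;\beta)=\sum_{j=1}^l w_j\exp(f(x_j)^T\beta)f(x_j)f(x_j)^T$, and the Poisson–Gamma information matrix is $M(\xi;\beta)=\frac{a}{b}\Bigl(M_{Po}(\xi;\beta)-\frac{M_{Po}(\xi;\beta)e_1e_1^TM_{Po}(\xi;\beta)}{e_1^TM_{Po}(\xi;\beta)e_1+b/m}\Bigr)$, $e_1$ the first standard unit vector of $\mathbb{R}^p$. For a model with information matrix $N(\xi)$ (either $M$ or $M_{Po}$), $A^T\beta$ is identifiable for $\xi$ if $A=N(\xi)H$ for some $H\in\mathbb{R}^{p\times s}$. A design $\xi^*$ is $L$-optimal with respect to $B=AA^T$ if $A^T\beta$ is identifiable for $\xi^*$ and $\operatorname{tr}(N(\xi^* )^-B)\le\operatorname{tr}(N(\xi)^-B)$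 for all designs $\xi$ for which $A^T\beta$ is identifiable ($^-$ a generalized inverse). $c$-optimality is the special case $A=c$, $B=cc^T$, with criterion $c^TN(\xi)^-c$. *)

(* Defs.v *)
From HB Require Import structures.
From mathcomp Require Import all_boot all_order all_algebra.
From mathcomp Require Import reals.
From mathcomp Require Import sequences exp.
Set Implicit Arguments. Unset Strict Implicit. Unset Printing Implicit Defensive.
Import Order.TTheory GRing.Theory Num.Theory.
Local Open Scope ring_scope.

Record design (X : Type) (R : realType) := Design {
  dsize : nat;
  dpts : 'I_dsize -> X;
  dwts : 'I_dsize -> R;
  dwts_ge0 : forall j, 0 <= dwts j;
  dwts_sum1 : \sum_j dwts j = 1 }.
Arguments dsize {X R} d.
Arguments dpts {X R} d _.
Arguments dwts {X R} d _.

Section Info.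
Variables (X : Type) (R : realType) (p : nat).

Definition e1 : 'cV[R]_p.+1 := delta_mx ord0 0.

Definition M_Po (f : X -> 'cV[R]_p.+1) (beta : 'cV[R]_p.+1) (xi : design X R)
  : 'M[R]_p.+1 :=
  \sum_(j < dsize xi)
     (dwts xi j * expR (((f (dpts xi j))^T *m beta) 0 0))
       *: (f (dpts xi j) *m (f (dpts xi j))^T).

Definition M_PG (a b : R) (m : nat) (f : X -> 'cV[R]_p.+1)
  (beta : 'cV[R]_p.+1) (xi : design X R) : 'M[R]_p.+1 :=
  let Mp := M_Po f beta xi in
  (a / b) *: (Mp - ((e1^T *m Mp *m e1) 0 0 + b / m%:R)^-1
                     *: (Mp *m e1 *m e1^T *m Mp)).

Definition is_ginv (N G : 'M[R]_p.+1) : Prop := N *m G *m N = N.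

(* A^T beta is identifiable for xi in the model with information matrix N *)
Definition identifiable (s : nat) (N : design X R -> 'M[R]_p.+1)
  (A : 'M[R]_(p.+1, s)) (xi : design X R) : Prop :=
  exists H : 'M[R]_(p.+1, s), A = N xi *m H.

(* L-optimality w.r.t. B = A A^T; the criterion tr(N^- B) is compared for
   arbitrary choices of generalized inverses. *)
Definition L_optimal (s : nat) (N : design X R -> 'M[R]_p.+1)
  (A : 'M[R]_(p.+1, s)) (xi_star : design X R) : Prop :=
  identifiable N A xi_star /\
  forall xi : design X R, identifiable N A xi ->
  forall Gs G : 'M[R]_p.+1, is_ginv (N xi_star) Gs -> is_ginv (N xi) G ->
    \tr (Gs *m (A *m A^T)) <= \tr (G *m (A *m A^T)).

Definition c_optimal (N : design X R -> 'M[R]_p.+1) (c : 'cV[R]_p.+1)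
  (xi_star : design X R) : Prop :=
  identifiable N c xi_star /\
  forall xi : design X R, identifiable N c xi ->
  forall Gs G : 'M[R]_p.+1, is_ginv (N xi_star) Gs -> is_ginv (N xi) G ->
    (c^T *m Gs *m c) 0 0 <= (c^T *m G *m c) 0 0.

End Info.

(* Main.v *)
Require Import Defs.
From HB Require Import structures.
From mathcomp Require Import all_boot all_order all_algebra.
From mathcomp Require Import reals.
From mathcomp Require Import sequences exp.
From mathcomp Require Import ring lra.
Set Implicit Arguments. Unset Strict Implicit. Unset Printing Implicit Defensive.
Import Order.TTheory GRing.Theory Num.Theory.
Local Open Scope ring_scope.

Section Core.
Variables (R : realType) (n : nat).

Lemma trZ m1 m2 (x : R) (A : 'M[R]_(m1, m2)) : (x *: A)^T = x *: A^T.
Proof. by apply/matrixP=> i j; rewrite !mxE. Qed.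
Lemma trB m1 m2 (A B : 'M[R]_(m1, m2)) : (A - B)^T = A^T - B^T.
Proof. by apply/matrixP=> i j; rewrite !mxE. Qed.
Lemma trS m1 m2 I (r : seq I) (F : I -> 'M[R]_(m1, m2)) :
  (\sum_(i <- r) F i)^T = \sum_(i <- r) (F i)^T.
Proof. by apply/matrixP=> i j; rewrite !(mxE, summxE); apply: eq_bigr => ? _; rewrite mxE. Qed.

Lemma ginv_val s (N G : 'M[R]_n) (A : 'M[R]_(n, s)) H :
  N^T = N -> N *m G *m N = N -> A = N *m H ->
  \tr (G *m (A *m A^T)) = \tr (A^T *m H).
Proof.
move=> sN gN ->.
rewrite trmx_mul sN !mulmxA mxtrace_mulC !mulmxA gN.
by rewrite mxtrace_mulC mulmxA.
Qed.

Variables (Mp : 'M[R]_n) (e : 'cV[R]_n) (c d : R).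
Hypotheses (sMp : Mp^T = Mp) (c0 : c != 0) (d0 : d != 0).
Let t := (e^T *m Mp *m e) 0 0.
Let k := t + d.
Hypothesis (k0 : k != 0).
Let M := c *: (Mp - k^-1 *: (Mp *m e *m e^T *m Mp)).
Let E := e *m e^T *m Mp.
Let P := 1%:M - k^-1 *: E.
Let Q := 1%:M + d^-1 *: E.

Lemma MP : M = c *: (Mp *m P).
Proof.
by rewrite /M /P mulmxBr mulmx1 -scalemxAr /E !mulmxA.
Qed.

Lemma EE : E *m E = t *: E.
Proof.
have h : e^T *m (Mp *m e) = t%:M by rewrite mulmxA [LHS]mx11_scalar.
rewrite /E -!mulmxA (mulmxA Mp e) (mulmxA e^T (Mp *m e)) h.
by rewrite mul_scalar_mx -!scalemxAr.
Qed.

Lemma PQ : P *m Q = 1%:M.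
Proof.
rewrite /P /Q mulmxBl !mulmxDr !mul1mx !mulmx1 -!scalemxAr -!scalemxAl EE.
rewrite !scalerA.
have -> : d^-1 / k * t = d^-1 - k^-1.
  by move: k0; rewrite /k => hk; field; rewrite hk d0.
by rewrite -scalerDl [k^-1 + _]addrC subrK addrK.
Qed.

Lemma ident_equiv s (A : 'M[R]_(n, s)) :
  (exists H, A = M *m H) <-> (exists H, A = Mp *m H).
Proof.
split=> [[H ->]|[H ->]].
  by exists (c *: (P *m H)); rewrite MP -scalemxAl -scalemxAr mulmxA.
exists (c^-1 *: (Q *m H)).
rewrite MP -scalemxAl -scalemxAr scalerA mulfV // scale1r.
by rewrite !mulmxA -(mulmxA Mp) PQ mulmx1.
Qed.

Lemma val_rel s (A : 'M[R]_(n, s)) (H : 'M[R]_(n, s)) :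
  A = Mp *m H ->
  \tr (A^T *m (c^-1 *: (Q *m H))) =
  c^-1 * (\tr (A^T *m H) + d^-1 * \tr (A^T *m e *m e^T *m A)).
Proof.
move=> hA.
rewrite -scalemxAr mxtraceZ /Q mulmxDl mul1mx mulmxDr mxtraceD.
rewrite -scalemxAl -scalemxAr mxtraceZ /E -!mulmxA -hA !mulmxA.
done.
Qed.

Lemma ident_back s (A : 'M[R]_(n, s)) H :
  A = Mp *m H -> A = M *m (c^-1 *: (Q *m H)).
Proof.
move=> ->.
rewrite MP -scalemxAl -scalemxAr scalerA mulfV // scale1r.
by rewrite !mulmxA -(mulmxA Mp) PQ mulmx1.
Qed.

Lemma M_sym : M^T = M.
Proof.
rewrite /M trZ trB trZ sMp !trmx_mul !trmxK sMp.
by rewrite !mulmxA.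
Qed.


Lemma val_PG s (A : 'M[R]_(n, s)) H G Gp :
  A = Mp *m H -> M *m G *m M = M -> Mp *m Gp *m Mp = Mp ->
  \tr (G *m (A *m A^T)) =
  c^-1 * (\tr (Gp *m (A *m A^T)) + d^-1 * \tr (A^T *m e *m e^T *m A)).
Proof.
move=> hA gG gGp.
rewrite (ginv_val M_sym gG (ident_back hA)) (ginv_val sMp gGp hA).
exact: val_rel.
Qed.

End Core.

Section Main.
Variables (X : Type) (R : realType) (p : nat).

Lemma MPo_sym f beta (xi : design X R) :
  (@M_Po X R p f beta xi)^T = M_Po f beta xi.
Proof.
rewrite /M_Po trS; apply: eq_bigr => j _.
by rewrite trZ trmx_mul trmxK.
Qed.

Lemma MPo_t_ge0 f beta (xi : design X R) :
  0 <= ((e1 R p)^T *m @M_Po X R p f beta xi *m e1 R p) 0 0.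
Proof.
rewrite /M_Po mulmx_sumr mulmx_suml summxE; apply: sumr_ge0 => j _.
rewrite -scalemxAr -scalemxAl mxE; apply: mulr_ge0.
  by apply: mulr_ge0; [exact: dwts_ge0 | exact: expR_ge0].
rewrite mulmxA -[(e1 R p)^T *m _]trmxK trmx_mul trmxK -mulmxA.
set y := _ *m e1 R p.
rewrite mxE; apply: sumr_ge0 => i _; rewrite mxE -expr2; exact: sqr_ge0.
Qed.

Definition val (N : design X R -> 'M[R]_p.+1) s (A : 'M[R]_(p.+1, s)) xi :=
  \tr (pinvmx (N xi) *m (A *m A^T)).

Lemma pinv_ginv (N : 'M[R]_p.+1) : is_ginv N (pinvmx N).
Proof. by rewrite /is_ginv mulmxKpV // submx_refl. Qed.

Lemma Lopt_iff (N : design X R -> 'M[R]_p.+1) s (A : 'M[R]_(p.+1, s)) xs :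
  (forall xi, (N xi)^T = N xi) ->
  L_optimal N A xs <->
  identifiable N A xs /\ forall xi, identifiable N A xi -> val N A xs <= val N A xi.
Proof.
move=> hs; split=> [[hi ho]|[hi ho]]; split=> // xi hx.
  exact: (ho xi hx _ _ (pinv_ginv _) (pinv_ginv _)).
move=> Gs G gs g.
have [H1 E1] := hi; have [H2 E2] := hx.
rewrite (ginv_val (hs xs) gs E1) (ginv_val (hs xi) g E2).
move: (ho xi hx); rewrite /val.
by rewrite (ginv_val (hs xs) (pinv_ginv _) E1) (ginv_val (hs xi) (pinv_ginv _) E2).
Qed.

Lemma tr11 (B : 'M[R]_1) : \tr B = B 0 0.
Proof. by rewrite /mxtrace big_ord1. Qed.

Lemma crit_eq (G : 'M[R]_p.+1) (c : 'cV[R]_p.+1) :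
  (c^T *m G *m c) 0 0 = \tr (G *m (c *m c^T)).
Proof. by rewrite mulmxA mxtrace_mulC mulmxA tr11. Qed.

Lemma copt_L (N : design X R -> 'M[R]_p.+1) c xs :
  c_optimal N c xs <-> L_optimal N c xs.
Proof.
split=> [][hi ho]; split=> // xi hx Gs G gs g.
  by rewrite -!crit_eq; exact: (ho xi hx Gs G gs g).
by rewrite !crit_eq; exact: (ho xi hx Gs G gs g).
Qed.

Lemma main_L (a b : R) (m : nat) f beta s (A : 'M[R]_(p.+1, s)) xs :
  0 < a -> 0 < b -> (0 < m)%N ->
  L_optimal (M_PG a b m f beta) A xs <-> L_optimal (@M_Po X R p f beta) A xs.
Proof.
move=> a0 b0 m0.
have c0 : a / b != 0 by rewrite gt_eqF // divr_gt0.
have dp : 0 < b / m%:R by rewrite divr_gt0 // ltr0n.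
have d0 : b / m%:R != 0 by rewrite gt_eqF.
have k0 : forall xi, ((e1 R p)^T *m M_Po f beta xi *m e1 R p) 0 0 + b / m%:R != 0.
  by move=> xi; rewrite gt_eqF // ltr_wpDl // MPo_t_ge0.
have idq : forall xi, identifiable (M_PG a b m f beta) A xi <->
                      identifiable (@M_Po X R p f beta) A xi.
  move=> xi; exact: (ident_equiv c0 d0 (k0 xi) A).
have symPG : forall xi, (M_PG a b m f beta xi)^T = M_PG a b m f beta xi.
  move=> xi; exact: (M_sym (e1 R p) (a / b) (b / m%:R) (MPo_sym f beta xi)).
have vq : forall xi, identifiable (@M_Po X R p f beta) A xi ->
   val (M_PG a b m f beta) A xi = (a / b)^-1 * (val (M_Po f beta) A xi +
      (b / m%:R)^-1 * \tr (A^T *m e1 R p *m (e1 R p)^T *m A)).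
  move=> xi [H hA].
  exact: (val_PG (MPo_sym f beta xi) c0 d0 (k0 xi) hA (pinv_ginv _) (pinv_ginv _)).
rewrite (Lopt_iff _ _ symPG) (Lopt_iff _ _ (MPo_sym f beta)).
split=> [][hi ho]; split; try by apply/idq.
  move=> xi hx; move: (ho xi (proj2 (idq xi) hx)).
  rewrite (vq _ hx) (vq _ (proj1 (idq xs) hi)).
  by rewrite ler_pM2l ?invr_gt0 ?divr_gt0 // lerD2r.
move=> xi hx; rewrite (vq _ (proj1 (idq xi) hx)) (vq _ hi).
by rewrite ler_pM2l ?invr_gt0 ?divr_gt0 // lerD2r; apply: ho; apply/idq.
Qed.

End Main.

Theorem theorem11 (R : realType) (X : Type) (p s m : nat) (a b : R)
  (beta : 'cV[R]_p.+1) (f : X -> 'cV[R]_p.+1) (A : 'M[R]_(p.+1, s)) :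
  0 < a -> 0 < b -> (0 < m)%N ->
  (forall x : X, f x ord0 0 = 1) ->
  \rank A = s ->
  (forall xi_star : design X R,
     L_optimal (M_PG a b m f beta) A xi_star <-> L_optimal (M_Po f beta) A xi_star) /\
  (forall c : 'cV[R]_p.+1, c != 0 ->
   forall xi_star : design X R,
     c_optimal (M_PG a b m f beta) c xi_star <-> c_optimal (M_Po f beta) c xi_star).
Proof.
move=> a0 b0 m0 _ _; split=> [xs|c _ xs]; first exact: main_L.
by rewrite !copt_L; apply: main_L.
Qed.
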